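(* Let $G$ be a finite group, $\varphi\in\mathrm{Aut}(G)$, and $U$ a subgroup with $\Delta(G,\varphi)\leq U\leq G\times G$. Then for $i\in\{1,2\}$ one has $k_i(U')=[k_i(U),G]$.
   Context: $\Delta(G,\varphi)=\{(g,\varphi(g)):g\in G\}\leq G\times G$ (twisted diagonal subgroup). For $U\leq G\times G$: $k_1(U)=\{g:(g,1)\in U\}$, $k_2(U)=\{h:(1,h)\in U\}$. $U'$ denotes the commutator subgroup of $U$, and $[X,G]$ the subgroup generated by commutators $[x,g]$, $x\in X$, $g\in G$. *)

(* Defs.v *)
From HB Require Import structures.
From mathcomp Require Import all_boot all_fingroup all_solvable.
Set Implicit Arguments.
Unset Strict Implicit.
Unset Printing Implicit Defensive.
Local Open Scope group_scope.

Definition twisted_diag (gT : finGroupType) (G : {set gT}) (phi : {perm gT})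
  : {set gT * gT} := [set (g, phi g) | g in G].

Definition k1 (gT : finGroupType) (U : {set gT * gT}) : {set gT} :=
  [set g | (g, 1) \in U].
Definition k2 (gT : finGroupType) (U : {set gT * gT}) : {set gT} :=
  [set h | (1, h) \in U].

(* Main.v *)
Require Import Defs.
From HB Require Import structures.
From mathcomp Require Import all_boot all_fingroup all_solvable.
Local Open Scope group_scope.

Section Aux.
Variable gT : finGroupType.

Lemma pairM (a b c d : gT) : (a, b) * (c, d) = (a * c, b * d). Proof. by []. Qed.
Lemma pairV (a b : gT) : (a, b)^-1 = (a^-1, b^-1). Proof. by []. Qed.
Lemma pairR (a b c d : gT) : [~ (a, b), (c, d)] = ([~ a, c], [~ b, d]). Proof. by []. Qed.
Lemma pair11 : (1 : gT * gT) = (1, 1). Proof. by []. Qed.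

Lemma k1_gs (H : {group gT * gT}) : group_set (k1 H).
Proof.
apply/group_setP; split; first by rewrite inE -pair11 group1.
by move=> x y; rewrite !inE => Hx Hy; have := groupM Hx Hy; rewrite pairM mulg1.
Qed.
Canonical k1_group H := Group (k1_gs H).

Lemma k2_gs (H : {group gT * gT}) : group_set (k2 H).
Proof.
apply/group_setP; split; first by rewrite inE -pair11 group1.
by move=> x y; rewrite !inE => Hx Hy; have := groupM Hx Hy; rewrite pairM mulg1.
Qed.
Canonical k2_group H := Group (k2_gs H).

Variables (G : {group gT}) (phi : {perm gT}) (U : {group gT * gT}).
Hypotheses (phiA : phi \in Aut G) (hD : twisted_diag G phi \subset U)
  (hU : U \subset setX G G).

Lemma hdiag {g} : g \in G -> (g, phi g) \in U.
Proof. by move=> Gg; apply: (subsetP hD); apply/imsetP; exists g. Qed.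

Lemma hUG {u v} : (u, v) \in U -> u \in G /\ v \in G.
Proof. by move/(subsetP hU); rewrite in_setX => /andP. Qed.

Lemma derU {u v} : (u, v) \in [~: U, U] -> (u, v) \in U.
Proof. by apply: (subsetP); rewrite commg_subl normG. Qed.

Lemma k1_part : k1 [~: U, U] = [~: k1 U, G].
Proof.
set K := k1 U; set N := [~: K, G].
have aA : phi^-1 \in Aut G := groupVr phiA.
set a := phi^-1 in aA *.
have aM := morphicP (Aut_morphic aA).
have a1 : a 1 = 1.
  have h := aM 1 1 (group1 G) (group1 G); rewrite mulg1 in h.
  by apply: (mulgI (a 1)); rewrite mulg1 -h.
have aG := Aut_closed aA.
have KG : K \subset G.
  by apply/subsetP => k; rewrite inE => /hUG [].
have NG : G \subset 'N(N) := commg_normr G K.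
have psiK : forall u v, (u, v) \in U -> u * (a v)^-1 \in K.
  move=> u v Uw; have [Gu Gv] := hUG Uw.
  have Gg : a v \in G by apply: aG.
  have := groupM Uw (groupVr (hdiag Gg)).
  by rewrite /a permKV pairV pairM mulgV inE.
pose f := fun w : gT * gT => coset N (w.1 * (a w.2)^-1).
have fM : {in U &, {morph f : x y / x * y}}.
  move=> [x1 x2] [y1 y2] Ux Uy; rewrite /f /=.
  have [Gx1 Gx2] := hUG Ux; have [Gy1 Gy2] := hUG Uy.
  have Kk := psiK _ _ Uy.
  have Gg : (a x2)^-1 \in G by rewrite groupV aG.
  have Gk : y1 * (a y2)^-1 \in G := subsetP KG _ Kk.
  rewrite aM // invMg !mulgA -(mulgA x1).
  have nN := subsetP NG.
  set k := y1 * (a y2)^-1 in Kk Gk *; set g := (a x2)^-1 in Gg *.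
  clearbody k g.
  rewrite !morphM ?groupM ?nN //.
  have hc : commute (coset N k) (coset N g).
    apply/commgP; rewrite -morphR ?nN //.
    by apply/eqP; apply: coset_id; apply: mem_commg.
  by rewrite -!mulgA hc.
pose fm := @Morphism _ _ U f fM.
have sUk : [~: U, U] \subset 'ker fm.
  rewrite gen_subG; apply/subsetP => _ /imset2P[[x1 x2] [y1 y2] Ux Uy ->].
  apply/kerP; first by rewrite groupR.
  rewrite morphR //= /f /=.
  have Kk := psiK _ _ Ux; have Kl := psiK _ _ Uy.
  have nN := subsetP NG; have KG' := subsetP KG.
  rewrite -morphR ?nN ?KG' //.
  by apply: coset_id; apply: mem_commg => //; apply: KG'.
apply/eqP; rewrite eqEsubset; apply/andP; split.
  apply/subsetP => c; rewrite inE => Hc.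
  have [Gc _] := hUG (derU Hc).
  have := mker (subsetP sUk _ Hc); rewrite /= /f /= a1 invg1 mulg1.
  by apply: coset_idr; apply: (subsetP NG).
rewrite gen_subG; apply/subsetP => _ /imset2P[x g Kx Gg ->].
rewrite inE.
have := mem_commg (_ : (x, 1) \in U) (hdiag Gg).
by rewrite pairR comm1g; apply; move: Kx; rewrite inE.
Qed.

Lemma k2_part : k2 [~: U, U] = [~: k2 U, G].
Proof.
set K := k2 U; set N := [~: K, G].
have aA : phi^-1 \in Aut G := groupVr phiA.
have aG := Aut_closed aA.
have aM := morphicP (Aut_morphic phiA).
have a1 : phi 1 = 1.
  have h := aM 1 1 (group1 G) (group1 G); rewrite mulg1 in h.
  by apply: (mulgI (phi 1)); rewrite mulg1 -h.
have pG := Aut_closed phiA.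
have KG : K \subset G.
  by apply/subsetP => k; rewrite inE => /hUG [].
have NG : G \subset 'N(N) := commg_normr G K.
have psiK : forall u v, (u, v) \in U -> v * (phi u)^-1 \in K.
  move=> u v Uw; have [Gu Gv] := hUG Uw.
  have := groupM Uw (groupVr (hdiag Gu)).
  by rewrite pairV pairM mulgV inE.
pose f := fun w : gT * gT => coset N (w.2 * (phi w.1)^-1).
have fM : {in U &, {morph f : x y / x * y}}.
  move=> [x1 x2] [y1 y2] Ux Uy; rewrite /f /=.
  have [Gx1 Gx2] := hUG Ux; have [Gy1 Gy2] := hUG Uy.
  have Kk := psiK _ _ Uy.
  have Gg : (phi x1)^-1 \in G by rewrite groupV pG.
  have Gk : y2 * (phi y1)^-1 \in G := subsetP KG _ Kk.
  rewrite aM // invMg !mulgA -(mulgA x2).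
  have nN := subsetP NG.
  set k := y2 * (phi y1)^-1 in Kk Gk *; set g := (phi x1)^-1 in Gg *.
  clearbody k g.
  rewrite !morphM ?groupM ?nN //.
  have hc : commute (coset N k) (coset N g).
    apply/commgP; rewrite -morphR ?nN //.
    by apply/eqP; apply: coset_id; apply: mem_commg.
  by rewrite -!mulgA hc.
pose fm := @Morphism _ _ U f fM.
have sUk : [~: U, U] \subset 'ker fm.
  rewrite gen_subG; apply/subsetP => _ /imset2P[[x1 x2] [y1 y2] Ux Uy ->].
  apply/kerP; first by rewrite groupR.
  rewrite morphR //= /f /=.
  have Kk := psiK _ _ Ux; have Kl := psiK _ _ Uy.
  have nN := subsetP NG; have KG' := subsetP KG.
  rewrite -morphR ?nN ?KG' //.
  by apply: coset_id; apply: mem_commg => //; apply: KG'.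
apply/eqP; rewrite eqEsubset; apply/andP; split.
  apply/subsetP => c; rewrite inE => Hc.
  have [_ Gc] := hUG (derU Hc).
  have := mker (subsetP sUk _ Hc); rewrite /= /f /= a1 invg1 mulg1.
  by apply: coset_idr; apply: (subsetP NG).
rewrite gen_subG; apply/subsetP => _ /imset2P[x g Kx Gg ->].
rewrite inE.
have := mem_commg (_ : (1, x) \in U) (hdiag (aG _ Gg)).
by rewrite permKV pairR comm1g; apply; move: Kx; rewrite inE.
Qed.

End Aux.

Theorem proposition5p2 (gT : finGroupType) (G : {group gT}) (phi : {perm gT})
  (U : {group gT * gT}) :
  phi \in Aut G ->
  twisted_diag G phi \subset U -> U \subset setX G G ->
  k1 [~: U, U] = [~: k1 U, G] /\ k2 [~: U, U] = [~: k2 U, G].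
Proof.
move=> phiA hD hU; split.
  exact: (@k1_part gT G phi U phiA hD hU).
exact: (@k2_part gT G phi U phiA hD hU).
Qed.
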